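(* Fix the parameters $S_1,\dots,S_{\mathcal K}$, $\lambda_1,\dots,\lambda_{\mathcal K}$ of the storage model in the context. Suppose that there exists a routing policy $P$ such that the shape process $\tilde X(t)$ with routing policy $P$ is recurrent. Then the linear system \[ \sum_{j=1}^{\kappa_i}\alpha_{ij}=\lambda_i\ (i=1,\dots,\mathcal K),\qquad \sum_{i=1}^{\mathcal K}\sum_{j=1}^{\kappa_i}\alpha_{ij}\,\delta_{\ell,s^i_j}=\tfrac1n\ (\ell=1,\dots,n) \] has a non-negative solution $(\alpha_{ij})$ (and hence there exists a routing policy, not depending on $x$, under which arrivals at all nodes are independent Poisson processes of common rate $1/n$).
   Context: Storage model: there are $n$ nodes $\{1,\dots,n\}$ and $\mathcal K\ge1$ non-empty neighborhoods $S_1,\dots,S_{\mathcal K}\subset\{1,\dots,n\}$ with $\bigcup_i S_i=\{1,\dots,n\}$; $\kappa_i=|S_i|$ and $S_i=\{s^i_1,\dots,s^i_{\kappa_i}\}$. Items arrive at $S_i$ as independent Poisson processes with rates $\lambda_i>0$, $\sum_{i=1}^{\mathcal K}\lambda_i=1$. Let $\Lambda_i=\{p\in\mathbb R^{\kappa_i}:p_j\ge0,\sum_j p_j=1\}$. A routing policy is a map $P:\mathbb N^n\to\Lambda_1\times\dots\times\Lambda_{\mathcal K}$ with $P(x+c\mathbf 1)=P(x)$ for all integers $c$; an item arriving at $S_i$ when the configuration is $x$ is stored at node $s^i_j$ with probability $p^{(i)}_j(x)$, independently for each arrival (the policy need not be local). $X(t)$ is the vector of node loads at time $t$, $M(t)=\frac1n\sum_iX_i(t)$,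 the shape is $\tilde X(t)=X(t)-M(t)\mathbf 1$, and $\tilde X^e(m)$ is the shape observed at successive arrival moments. With $\tau=\inf\{m>0:\tilde X^e(m)=0\}$, the process is called recurrent if $\mathbf P(\tau<\infty\mid\tilde X^e(0)=x)=1$ for every $x$. $\delta_{\ell,m}$ is the Kronecker delta. *)

(* Defs.v *)
From HB Require Import structures.
From mathcomp Require Import all_boot all_order all_algebra.
From mathcomp Require Import reals.
Set Implicit Arguments. Unset Strict Implicit. Unset Printing Implicit Defensive.
Import Order.TTheory GRing.Theory Num.Theory.
Local Open Scope ring_scope.

(* A configuration of node loads: x : 'I_n -> nat. *)

Definition cshift (n : nat) (x : 'I_n -> nat) (c : nat) : 'I_n -> nat :=
  fun l => (x l + c)%N.

Definition incr (n : nat) (x : 'I_n -> nat) (l : 'I_n) : 'I_n -> nat :=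
  fun k => (x k + (k == l))%N.

(* the shape x - M 1 is zero iff all loads are equal *)
Definition balanced (n : nat) (x : 'I_n -> nat) : bool :=
  [forall l, [forall l', x l == x l']].

(* Routing policy: p x i j = p^{(i)}_j(x), probability that an item arriving
   at neighborhood S_i in configuration x is stored at node s^i_j. *)
Definition routing_policy (R : realType) (n K : nat) (kappa : 'I_K -> nat)
  (p : ('I_n -> nat) -> forall i : 'I_K, 'I_(kappa i) -> R) : Prop :=
  (forall x i j, 0 <= p x i j) /\
  (forall x i, \sum_(j < kappa i) p x i j = 1) /\
  (forall x c i j, p (cshift x c) i j = p x i j).

(* Transition probability of the embedded chain at arrival moments:
   the next arrival is at S_i w.p. lambda_i (sum lambda = 1), then routed by p. *)
Definition step_prob (R : realType) (n K : nat) (kappa : 'I_K -> nat)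
  (s : forall i : 'I_K, 'I_(kappa i) -> 'I_n) (lam : 'I_K -> R)
  (p : ('I_n -> nat) -> forall i : 'I_K, 'I_(kappa i) -> R)
  (x : 'I_n -> nat) (l : 'I_n) : R :=
  \sum_(i < K) lam i * \sum_(j < kappa i) p x i j * (s i j == l)%:R.

(* hit_prob N x = P(tau <= N | X^e(0) = x), tau = inf{m > 0 : shape = 0}. *)
Fixpoint hit_prob (R : realType) (n K : nat) (kappa : 'I_K -> nat)
  (s : forall i : 'I_K, 'I_(kappa i) -> 'I_n) (lam : 'I_K -> R)
  (p : ('I_n -> nat) -> forall i : 'I_K, 'I_(kappa i) -> R)
  (N : nat) (x : 'I_n -> nat) : R :=
  match N with
  | O => 0
  | N'.+1 => \sum_(l < n) step_prob s lam p x l *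
       (if balanced (incr x l) then 1 else hit_prob s lam p N' (incr x l))
  end.

(* Recurrence: P(tau < oo | X^e(0) = x) = lim_N P(tau <= N) = 1 for all x. *)
Definition recurrent (R : realType) (n K : nat) (kappa : 'I_K -> nat)
  (s : forall i : 'I_K, 'I_(kappa i) -> 'I_n) (lam : 'I_K -> R)
  (p : ('I_n -> nat) -> forall i : 'I_K, 'I_(kappa i) -> R) : Prop :=
  forall x : 'I_n -> nat, forall eps : R, 0 < eps ->
    exists N : nat, 1 - eps <= hit_prob s lam p N x.

(* Main.v *)
Require Import Defs.
From HB Require Import structures.
From mathcomp Require Import all_boot all_order all_algebra.
From mathcomp Require Import reals.
From mathcomp Require Import ring lra zify.
Import Order.TTheory GRing.Theory Num.Theory.
Local Open Scope ring_scope.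

Set Implicit Arguments. Unset Strict Implicit. Unset Printing Implicit Defensive.

Definition nbr (T L : finType) (E : T -> L -> bool) (I : {set T}) : {set L} :=
  [set l | [exists i in I, E i l]].

Definition hallc (R : realFieldType) (T L : finType) (E : T -> L -> bool)
  (A : {set T}) (lam : T -> R) (d : L -> R) :=
  forall I : {set T}, I \subset A -> \sum_(i in I) lam i <= \sum_(l in nbr E I) d l.

Definition issol (R : realFieldType) (T L : finType) (E : T -> L -> bool)
  (A : {set T}) (lam : T -> R) (d : L -> R) (al : T -> L -> R) :=
  [/\ forall i l, 0 <= al i l, forall i l, ~~ E i l -> al i l = 0,
      forall i, i \in A -> \sum_l al i l = lam i &
      forall l, \sum_(i in A) al i l <= d l].

Definition edges (R : realFieldType) (T L : finType) (E : T -> L -> bool)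
  (A : {set T}) (d : L -> R) : {set T * L} :=
  [set p | (p.1 \in A) && E p.1 p.2 && (0 < d p.2)].

Lemma sum_if (R : realFieldType) (L : finType) (b : bool) (f : L -> R) :
  \sum_l (if b then f l else 0) = if b then \sum_l f l else 0.
Proof. by case: b => //; rewrite big1. Qed.

Lemma sum_ind (R : realFieldType) (T : finType) (I : {pred T}) i0 (t : R) :
  \sum_(i in I) (i == i0)%:R * t = (i0 \in I)%:R * t.
Proof.
case: (boolP (i0 \in I)) => h.
  rewrite (bigD1 i0) //= eqxx mul1r big1 ?addr0 ?mul1r //.
  by move=> i /andP[_ /negbTE ->]; rewrite mul0r.
rewrite big1 ?mul0r // => i iI; case: eqP => [e|]; last by rewrite mul0r.
by subst; rewrite iI in h.
Qed.

Lemma sum_if_in (R : realFieldType) (T : finType) (A A' : {set T}) (f : T -> R) :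
  A' \subset A -> \sum_(i in A) (if i \in A' then f i else 0) = \sum_(i in A') f i.
Proof.
move=> sub; rewrite -big_mkcondr; apply: eq_bigl => i /=.
by case: (boolP (i \in A')) => h; rewrite ?andbT ?andbF //; rewrite (subsetP sub).
Qed.

Lemma combine (R : realFieldType) (T L : finType) (E : T -> L -> bool)
  (A A' : {set T}) i0 (lam lam' : T -> R) (d d' a : L -> R) t al' :
  i0 \in A -> A' \subset A -> (forall i, i \in A -> i != i0 -> i \in A') ->
  (forall i, i \in A' -> i != i0 -> lam' i = lam i) ->
  (i0 \in A' -> lam' i0 = lam i0 - t) -> (i0 \notin A' -> lam i0 = t) ->
  (forall l, 0 <= a l) -> (forall l, ~~ E i0 l -> a l = 0) -> \sum_l a l = t ->
  (forall l, d' l + a l <= d l) ->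
  issol E A' lam' d' al' ->
  issol E A lam d (fun i l => (if i == i0 then a l else 0) + (if i \in A' then al' i l else 0)).
Proof.
move=> i0A sub inA' el' el0 el0' a0 aE asum dd [h1 h2 h3 h4]; split.
- move=> i l; apply: addr_ge0; [by case: eqP | by case: ifP].
- move=> i l nE; rewrite h2 // if_same addr0; case: eqP => // e; subst.
  exact: aE.
- move=> i iA; rewrite big_split /= sum_if sum_if asum.
  case: (i =P i0) => [e|/eqP ne]; last by rewrite (inA' i iA ne) h3 ?inA' // el' ?inA' // add0r.
  subst; case: (boolP (i0 \in A')) => h; first by rewrite h3 // el0 //; ring.
  by rewrite addr0 el0'.
- move=> l; rewrite big_split /= sum_if_in //.
  have -> : \sum_(i in A) (if i == i0 then a l else 0) = a l.
    rewrite (bigD1 i0) //= eqxx big1 ?addr0 // => i /andP[_ /negbTE ->] //.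
  have := h4 l; have := dd l; lra.
Qed.


Lemma nbrS (T L : finType) (E : T -> L -> bool) (I J : {set T}) :
  J \subset I -> nbr E J \subset nbr E I.
Proof.
move=> sub; apply/subsetP => l; rewrite !inE => /existsP[i /andP[iJ e]].
by apply/existsP; exists i; rewrite (subsetP sub) ?e.
Qed.

Lemma split_sol (R : realFieldType) (T L : finType) (E : T -> L -> bool)
  (A I : {set T}) lam (d : L -> R) al1 al2 :
  I \subset A ->
  issol E I lam (fun l => if l \in nbr E I then d l else 0) al1 ->
  issol E (A :\: I) lam (fun l => if l \in nbr E I then 0 else d l) al2 ->
  issol E A lam d (fun i l => if i \in I then al1 i l else al2 i l).
Proof.
move=> sub [a1 b1 c1 d1] [a2 b2 c2 d2]; split.
- by move=> i l; case: ifP.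
- by move=> i l nE; case: ifP => _; [apply: b1|apply: b2].
- move=> i iA; case: (boolP (i \in I)) => h; first exact: c1.
  by apply: c2; rewrite inE h iA.
- move=> l; rewrite (big_setID I) /=.
  have -> : A :&: I = I by apply/setIidPr.
  rewrite (eq_bigr (fun i => al1 i l)); last by move=> i ->.
  rewrite [X in _ + X](eq_bigr (fun i => al2 i l)); last by move=> i; rewrite !inE => /andP[/negbTE ->].
  have := d1 l; have := d2 l; case: ifP => _; lra.
Qed.

Lemma hall_sub (R : realFieldType) (T L : finType) (E : T -> L -> bool)
  (A A' : {set T}) lam (d : L -> R) :
  hallc E A lam d -> A' \subset A -> hallc E A' lam d.
Proof. by move=> h s I sI; apply: h; apply: subset_trans s. Qed.

Lemma hall_part1 (R : realFieldType) (T L : finType) (E : T -> L -> bool)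
  (A I : {set T}) lam (d : L -> R) :
  hallc E A lam d -> I \subset A ->
  hallc E I lam (fun l => if l \in nbr E I then d l else 0).
Proof.
move=> h s J sJ; rewrite (eq_bigr d); first by apply: h; apply: subset_trans s.
by move=> l lJ; rewrite (subsetP (nbrS E sJ)).
Qed.

Lemma sum_mk (R : realFieldType) (T : finType) (I : {set T}) (f : T -> R) :
  \sum_(i in I) f i = \sum_i (if i \in I then f i else 0).
Proof. by rewrite big_mkcond. Qed.

Lemma hall_part2 (R : realFieldType) (T L : finType) (E : T -> L -> bool)
  (A I : {set T}) lam (d : L -> R) :
  hallc E A lam d -> I \subset A ->
  \sum_(l in nbr E I) d l <= \sum_(i in I) lam i ->
  hallc E (A :\: I) lam (fun l => if l \in nbr E I then 0 else d l).
Proof.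
move=> h s tI J sJ.
have sJI : J :|: I \subset A.
  by rewrite subUset s andbT; apply: subset_trans sJ _; apply: subsetDl.
have := h _ sJI.
have -> : \sum_(i in J :|: I) lam i = \sum_(i in J) lam i + \sum_(i in I) lam i.
  rewrite !sum_mk -big_split; apply: eq_bigr => i _ /=; rewrite inE.
  case: (boolP (i \in J)) => iJ; case: (boolP (i \in I)) => iI //=; rewrite ?addr0 ?add0r //.
  by move: (subsetP sJ i iJ); rewrite inE iI.
have -> : \sum_(l in nbr E (J :|: I)) d l =
   \sum_(l in nbr E J) (if l \in nbr E I then 0 else d l) + \sum_(l in nbr E I) d l.
  rewrite !sum_mk -big_split; apply: eq_bigr => l _ /=.
  have -> : (l \in nbr E (J :|: I)) = (l \in nbr E J) || (l \in nbr E I).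
    rewrite !inE; apply/existsP/orP.
      by case=> i /andP[]; rewrite inE => /orP[] ? ?; [left|right]; apply/existsP; exists i; apply/andP.
    case=> /existsP[i /andP[a b]]; exists i; rewrite inE ?a ?b ?orbT //.
  by case: (l \in nbr E J); case: (l \in nbr E I); rewrite ?addr0 ?add0r.
lra.
Qed.

Lemma hall_move (R : realFieldType) (T L : finType) (E : T -> L -> bool)
  (A : {set T}) lam (d : L -> R) i0 l0 t :
  hallc E A lam d -> E i0 l0 ->
  (forall I : {set T}, I \subset A -> i0 \notin I -> l0 \in nbr E I ->
      t <= \sum_(l in nbr E I) d l - \sum_(i in I) lam i) ->
  hallc E A (fun i => lam i - (i == i0)%:R * t) (fun l => d l - (l == l0)%:R * t).
Proof.
move=> h e ht I sI; rewrite !sumrB !sum_ind.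
case: (boolP (i0 \in I)) => i0I.
  have -> : l0 \in nbr E I by rewrite inE; apply/existsP; exists i0; rewrite i0I.
  by have := h _ sI; lra.
case: (boolP (l0 \in nbr E I)) => l0I.
  by have := ht _ sI i0I l0I; rewrite /= ?mul1r ?mul0r; lra.
by have := h _ sI; rewrite /= ?mul1r ?mul0r; lra.
Qed.

Lemma argmin_seq (R : realFieldType) (X : eqType) (f : X -> R) (s : seq X) x0 :
  x0 \in s -> exists x, x \in s /\ forall y, y \in s -> f x <= f y.
Proof.
elim: s x0 => // a s IH x0 _.
case: s IH => [|b s] IH.
  by exists a; split; rewrite ?mem_head // => y; rewrite inE => /eqP ->.
have [x [xs xm]] := IH b (mem_head _ _).
case: (lerP (f a) (f x)) => h.
  exists a; split; first exact: mem_head.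
  move=> y; rewrite inE => /orP[/eqP ->//|/xm]; lra.
exists x; split; first by rewrite inE xs orbT.
move=> y; rewrite inE => /orP[/eqP ->|/xm //]; lra.
Qed.

Lemma argmin_fin (R : realFieldType) (X : finType) (P : pred X) (f : X -> R) x0 :
  P x0 -> exists x, P x /\ forall y, P y -> f x <= f y.
Proof.
move=> Px0; have x0e : x0 \in enum P by rewrite mem_enum.
have [x [xs xm]] := @argmin_seq R X f (enum P) x0 x0e.
exists x; split; first by rewrite mem_enum in xs.
by move=> y Py; apply: xm; rewrite mem_enum.
Qed.

Lemma edges_sub (R : realFieldType) (T L : finType) (E : T -> L -> bool)
  (A A' : {set T}) (d d' : L -> R) :
  A' \subset A -> (forall l, 0 < d' l -> 0 < d l) -> edges E A' d' \subset edges E A d.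
Proof.
move=> s dd; apply/subsetP => p; rewrite !inE => /andP[/andP[a b] c].
by rewrite (subsetP s) // b dd.
Qed.

Lemma sol_empty (R : realFieldType) (T L : finType) (E : T -> L -> bool) lam (d : L -> R) :
  (forall l, 0 <= d l) -> issol E set0 lam d (fun _ _ => 0).
Proof.
move=> d0; split => //; first by move=> i; rewrite inE.
by move=> l; rewrite big_pred0 // => i; rewrite inE.
Qed.


Lemma sum_ind1 (R : realFieldType) (L : finType) (l0 : L) (t : R) :
  \sum_l (l == l0)%:R * t = t.
Proof.
rewrite (bigD1 l0) //= eqxx mul1r big1 ?addr0 // => l /negbTE ->; by rewrite mul0r.
Qed.

Lemma meas1 (R : realFieldType) (T L : finType) (E : T -> L -> bool)
  (A A' : {set T}) (d d' : L -> R) :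
  (#|A'| < #|A|)%N -> edges E A' d' \subset edges E A d ->
  (#|A'| + #|edges E A' d'| < #|A| + #|edges E A d|)%N.
Proof. move=> h /subset_leq_card; lia. Qed.

Lemma hall_main (R : realFieldType) (T L : finType) (E : T -> L -> bool) k :
  forall (A : {set T}) (lam : T -> R) (d : L -> R),
  (#|A| + #|edges E A d| <= k)%N -> (forall i, i \in A -> 0 <= lam i) ->
  (forall l, 0 <= d l) -> hallc E A lam d -> exists al, issol E A lam d al.
Proof.
elim: k => [|k IH] A lam d hm hl hd hh.
  have : #|A| == 0%N by lia.
  by rewrite cards_eq0 => /eqP ->; exists (fun _ _ => 0); apply: sol_empty.
case: (set_0Vmem A) => [->|[i0 i0A]]; first by exists (fun _ _ => 0); apply: sol_empty.
have IH' : forall (A' : {set T}) (lam' : T -> R) (d' : L -> R),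
  (#|A'| + #|edges E A' d'| < #|A| + #|edges E A d|)%N ->
  (forall i, i \in A' -> 0 <= lam' i) ->
  (forall l, 0 <= d' l) -> hallc E A' lam' d' -> exists al, issol E A' lam' d' al.
  by move=> A' lam' d' hm'; apply: IH; lia.
have cA : (#|A :\ i0| < #|A|)%N by rewrite (cardsD1 i0 A) i0A.
have sA : A :\ i0 \subset A by apply: subsetDl.
have inA' : forall i, i \in A -> i != i0 -> i \in A :\ i0 by move=> i iA ne; rewrite !inE ne iA.
have ni0 : i0 \in A :\ i0 = false by rewrite !inE eqxx.
case: (boolP [exists l, E i0 l && (0 < d l)]) => [/existsP[l0 /andP[e0 dl0]] | nol].
  pose Q := fun I : {set T} => (I \subset A :\ i0) && (l0 \in nbr E I).
  pose slack := fun I : {set T} => \sum_(l in nbr E I) d l - \sum_(i in I) lam i.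
  have QI : forall I : {set T}, I \subset A -> i0 \notin I -> l0 \in nbr E I -> Q I.
    by move=> I sI nI lI; rewrite /Q lI andbT subsetD1 sI nI.
  have QA : forall I, Q I -> I \subset A.
    by move=> I /andP[s _]; apply: subset_trans s sA.
  have [σ [σ0 [σle σex]]] : exists σ, 0 <= σ /\ (forall I, Q I -> σ <= slack I) /\
      (σ < lam i0 -> exists I, Q I /\ slack I = σ).
    case: (boolP [exists I, Q I]) => [/existsP[I0 QI0]|noQ].
      have [Im [QIm mIm]] := argmin_fin slack QI0.
      exists (slack Im); split; last by split=> // _; exists Im.
      by have := hh _ (QA _ QIm); rewrite /slack; lra.
    exists (lam i0); split; first exact: hl.
    split; last by rewrite ltxx.
    by move=> I QIx; case/negP: noQ; apply/existsP; exists I.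
  pose lam' t := fun i => lam i - (i == i0)%:R * t.
  pose d' t := fun l => d l - (l == l0)%:R * t.
  have hmv : forall t, t <= σ -> hallc E A (lam' t) (d' t).
    move=> t tσ; apply: hall_move => // I sI nI lI.
    by have := σle _ (QI _ sI nI lI); rewrite /slack; lra.
  have lam'E : forall t i, i != i0 -> lam' t i = lam i.
    by move=> t i /negbTE ne; rewrite /lam' ne mul0r subr0.
  have d'le : forall t l, 0 <= t -> 0 < d' t l -> 0 < d l.
    move=> t l t0; rewrite /d'; case: (l == l0); rewrite /= ?mul1r ?mul0r; lra.
  have d'ge : forall t, 0 <= t -> t <= d l0 -> forall l, 0 <= d' t l.
    move=> t t0 tl l; rewrite /d'; case: eqP => [->|_]; rewrite /= ?mul1r ?mul0r.
      lra.
    by have := hd l; lra.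
  have comb : forall t (A' : {set T}) al', 0 <= t -> A' \subset A ->
      (forall i, i \in A -> i != i0 -> i \in A') ->
      (i0 \notin A' -> lam i0 = t) ->
      issol E A' (lam' t) (d' t) al' -> exists al, issol E A lam d al.
    move=> t A' al' t0 sub inA'' el0 sol.
    eexists; apply: (combine (i0 := i0) (a := fun l => (l == l0)%:R * t) (t := t)) sol => //.
    - by move=> i iA ne; apply: lam'E.
    - by move=> _; rewrite /lam' eqxx mul1r.
    - by move=> l; case: eqP; rewrite /= ?mul1r ?mul0r.
    - by move=> l; case: eqP => [->|]; rewrite ?e0 // mul0r.
    - exact: sum_ind1.
    - by move=> l; rewrite /d' subrK.
  case: (boolP ((lam i0 <= d l0) && (lam i0 <= σ))) => [/andP[c1 c2]|c12].
    have t0 := hl _ i0A.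
    have [al' sol'] : exists al, issol E (A :\ i0) (lam' (lam i0)) (d' (lam i0)) al.
      apply: IH'.
    - apply: meas1 => //; apply: edges_sub => // l; exact: d'le.
    - by move=> i; rewrite !inE => /andP[ne iA]; rewrite lam'E //; apply: hl.
    - exact: d'ge.
    - exact: hall_sub (hmv _ c2) sA.
    by apply: (comb _ _ al' t0 sA inA') => // _; rewrite ni0.
  case: (lerP (d l0) σ) => c3.
    have c4 : d l0 < lam i0.
      by case: (lerP (lam i0) (d l0)) => // c5; move: c12; rewrite c5 /=; lra.
    have t0 : 0 <= d l0 by apply: hd.
    have [al' sol'] : exists al, issol E A (lam' (d l0)) (d' (d l0)) al.
      apply: IH'.
    - have sub : edges E A (d' (d l0)) \subset edges E A d by apply: edges_sub => // l; exact: d'le.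
      have : edges E A (d' (d l0)) \proper edges E A d.
        apply/properP; split=> //; exists (i0, l0); first by rewrite !inE i0A e0 dl0.
        by rewrite !inE /d' eqxx mul1r subrr ltxx !andbF.
      by move/proper_card; lia.
    - move=> i iA; case: (i =P i0) => [->|/eqP ne]; last by rewrite lam'E //; apply: hl.
      by rewrite /lam' eqxx mul1r; lra.
    - exact: d'ge.
    - exact: hmv.
    by apply: (comb _ _ al' t0 (subxx _)) => //; rewrite i0A.
  (* t = σ : tight set *)
  have c5 : σ < lam i0.
    by case: (lerP (lam i0) σ) => // c6; move: c12; rewrite c6 andbT; lra.
  have [Im [QIm sIm]] := σex c5.
  have sImA := QA _ QIm.
  have hA := hmv _ (lexx σ).
  have lam'0 : forall i, i \in A -> 0 <= lam' σ i.
    move=> i iA; case: (i =P i0) => [->|/eqP ne]; last by rewrite lam'E //; apply: hl.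
    by rewrite /lam' eqxx mul1r; lra.
  have d'0 := d'ge σ σ0 (ltW c3).
  have edg : forall (A' : {set T}) (dd : L -> R), A' \subset A -> (forall l, 0 < dd l -> 0 < d' σ l) ->
      edges E A' dd \subset edges E A d.
    by move=> A' dd s h; apply: edges_sub => // l /h; apply: d'le.
  move: QIm => /andP[sIm0 l0Im].
  have [al1 sol1] : exists al, issol E Im (lam' σ) (fun l => if l \in nbr E Im then d' σ l else 0) al.
    apply: IH'.
  - apply: meas1; first by apply: leq_ltn_trans cA; apply: subset_leq_card.
    by apply: edg => // l; case: ifP => //; rewrite ltxx.
  - by move=> i iI; apply: lam'0; apply: (subsetP sImA).
  - by move=> l; case: ifP.
  - exact: hall_part1 hA sImA.
  have [al2 sol2] : exists al, issol E (A :\: Im) (lam' σ) (fun l => if l \in nbr E Im then 0 else d' σ l) al.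
    apply: IH'.
  - apply: meas1; last by apply: edg; [apply: subsetDl | move=> l; case: ifP => //; rewrite ltxx].
    move: l0Im; rewrite inE => /existsP[i /andP[iIm _]].
    rewrite -[X in (_ < X)%N](cardsID Im A) -[X in (X < _)%N]add0n ltn_add2r lt0n cards_eq0.
    by apply/set0Pn; exists i; rewrite inE iIm (subsetP sImA).
  - by move=> i; rewrite !inE => /andP[_ iA]; apply: lam'0.
  - by move=> l; case: ifP.
  - apply: hall_part2 => //.
    have i0Im : i0 \notin Im by move: sIm0; rewrite subsetD1 => /andP[].
    rewrite /d' /lam' !sumrB !sum_ind l0Im (negbTE i0Im) /= mul1r mul0r subr0.
    by move: sIm; rewrite /slack; lra.
  have sol := split_sol sImA sol1 sol2.
  by apply: (comb _ _ _ σ0 (subxx _) _ _ sol) => //; rewrite i0A.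
have lam0 : lam i0 = 0.
  have := hh [set i0]; rewrite sub1set i0A big_set1 => /(_ isT).
  rewrite big1; first by have := hl _ i0A; lra.
  move=> l; rewrite !inE => /existsP[i /andP[]]; rewrite inE => /eqP -> e.
  have : ~~ (0 < d l) by apply/negP => h; case/negP: nol; apply/existsP; exists l; rewrite e h.
  by have := hd l; lra.
have [al' sol'] : exists al, issol E (A :\ i0) lam d al.
  apply: IH'.
- apply: meas1 => //; exact: edges_sub.
- by move=> i; rewrite !inE => /andP[_ /hl].
- exact: hd.
- exact: hall_sub hh sA.
eexists; apply: (combine (i0 := i0) (a := fun _ => 0) (t := 0)) sol' => //.
all: try by rewrite ni0.
all: try by rewrite big1.
all: try by move=> l; rewrite addr0.
Qed.


Lemma amgm_two (R : realFieldType) (n : nat) (U : {set 'I_n}) (a b : R) :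
  (0 < n)%N -> 0 < a -> 0 < b ->
  #|U|%:R * a^-1 + #|~: U|%:R * b^-1 = n%:R ->
  1 <= a ^+ #|U| * b ^+ #|~: U|.
Proof.
move=> n0 a0 b0 hs.
pose E := fun l : 'I_n => if l \in U then a^-1 else b^-1.
have E0 : {in [set: 'I_n], forall i, 0 <= E i}.
  by move=> i _; rewrite /E; case: ifP => _; rewrite invr_ge0 ltW.
have := (leif_AGM E0).1.
rewrite (big_setID U) (big_setID U (A := [set: 'I_n])) setTI setTD /=.
rewrite (eq_bigr (fun _ => a^-1)); last by move=> i; rewrite /E => ->.
rewrite [X in _ * X](eq_bigr (fun _ => b^-1)); last by move=> i; rewrite /E inE => /negbTE ->.
rewrite [X in (X + _)](eq_bigr (fun _ => a^-1)); last by move=> i; rewrite /E => ->.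
rewrite [X in (_ + X)](eq_bigr (fun _ => b^-1)); last by move=> i; rewrite /E inE => /negbTE ->.
rewrite !prodr_const !sumr_const cardsT card_ord -[a^-1 *+ _]mulr_natl -[b^-1 *+ _]mulr_natl hs divff ?expr1n; last first.
  by rewrite pnatr_eq0 -lt0n.
move=> h.
have p0 : 0 < a ^+ #|U| * b ^+ #|~: U| by rewrite mulr_gt0 // exprn_gt0.
by rewrite -invf_le1 // invfM -!exprVn.
Qed.


Lemma sum_eqn (T : finType) (U : {pred T}) (l : T) :
  (\sum_(k in U) (k == l) = (l \in U))%N.
Proof.
case: (boolP (l \in U)) => h.
  rewrite (bigD1 l) //= eqxx big1 // => k /andP[_ /negbTE ->] //.
by rewrite big1 // => k kU; case: eqP => // e; subst; rewrite kU in h.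
Qed.

Lemma sum_pick (R : realFieldType) (L : finType) (l0 : L) (f : L -> R) :
  \sum_l (l0 == l)%:R * f l = f l0.
Proof.
rewrite (bigD1 l0) //= eqxx mul1r big1 ?addr0 // => l ne.
by rewrite eq_sym (negbTE ne) mul0r.
Qed.

Lemma nonrec (R : realType) (n K : nat) (kappa : 'I_K -> nat)
  (s : forall i : 'I_K, 'I_(kappa i) -> 'I_n) (lam : 'I_K -> R)
  (p : ('I_n -> nat) -> forall i : 'I_K, 'I_(kappa i) -> R)
  (I : {set 'I_K}) (U : {set 'I_n}) (l1 : 'I_n) (a b : R) :
  (forall x i j, 0 <= p x i j) -> (forall x i, \sum_(j < kappa i) p x i j = 1) ->
  (forall i, 0 <= lam i) ->
  (forall i j, i \in I -> s i j \in U) ->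
  l1 \in U -> 0 < a -> a < 1 -> a <= b ->
  (\sum_(i in I) lam i) * a + (\sum_(i in ~: I) lam i) * b <= 1 ->
  1 <= a ^+ #|U| * b ^+ #|~: U| ->
  ~ recurrent s lam p.
Proof.
move=> p0 p1 lam0 sU l1U a0 a1 ab hsum amgm rec.
pose h (x : 'I_n -> nat) := a ^+ (\sum_(l in U) x l)%N * b ^+ (\sum_(l in ~: U) x l)%N.
pose c (l : 'I_n) := if l \in U then a else b.
have b0 : 0 < b by lra.
have hincr : forall x l, h (incr x l) = h x * c l.
  move=> x l; rewrite /h /incr !big_split /= !sum_eqn !exprD /c inE.
  case: (l \in U) => /=; rewrite ?expr1 ?expr0; ring.
have h0 : forall x, 0 <= h x.
  by move=> x; rewrite /h mulr_ge0 // exprn_ge0 // ltW.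
have hbal : forall y, balanced y -> 1 <= h y.
  move=> y /forallP hb.
  have yk : forall l, y l = y l1 by move=> l; apply/eqP; exact: (forallP (hb l) l1).
  rewrite /h (eq_bigr (fun _ => y l1)) // [X in b ^+ X](eq_bigr (fun _ => y l1)) //.
  by rewrite !sum_nat_const !exprM -exprMn exprn_ege1.
have cb : forall l, c l <= b by move=> l; rewrite /c; case: ifP.
have cbound : forall x, \sum_l step_prob s lam p x l * c l <= 1.
  move=> x; rewrite /step_prob.
  have -> : \sum_l (\sum_(i < K) lam i * \sum_(j < kappa i) p x i j * (s i j == l)%:R) * c l
      = \sum_(i < K) lam i * \sum_(j < kappa i) p x i j * c (s i j).
    rewrite (eq_bigr (fun l => \sum_(i < K) \sum_(j < kappa i)
                  (lam i * p x i j) * ((s i j == l)%:R * c l))); last first.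
      move=> l _; rewrite mulr_suml; apply: eq_bigr => i _.
      rewrite mulr_sumr mulr_suml; apply: eq_bigr => j _; ring.
    rewrite exchange_big /=; apply: eq_bigr => i _.
    rewrite exchange_big /= mulr_sumr; apply: eq_bigr => j _.
    by rewrite -mulr_sumr sum_pick mulrA.
  apply: le_trans hsum.
  apply: (@le_trans _ _ (\sum_(i < K) lam i * (if i \in I then a else b))).
    apply: ler_sum => i _; apply: ler_wpM2l => //.
    case: (boolP (i \in I)) => iI.
      rewrite (eq_bigr (fun j => p x i j * a)); first by rewrite -mulr_suml p1 mul1r.
      by move=> j _; rewrite /c sU.
    apply: (@le_trans _ _ (\sum_(j < kappa i) p x i j * b)).
      by apply: ler_sum => j _; apply: ler_wpM2l.
    by rewrite -mulr_suml p1 mul1r.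
  rewrite (bigID (mem I)) /= !mulr_suml le_eqVlt; apply/orP; left; apply/eqP.
  congr (_ + _); first by apply: eq_bigr => i ->.
  rewrite (eq_bigr (fun i => lam i * b)); last by move=> i /negbTE ->.
  by apply: eq_bigl => i; rewrite inE.
have hit : forall N x, hit_prob s lam p N x <= h x.
  elim=> [|N IH] x /=; first exact: h0.
  apply: (@le_trans _ _ (\sum_l step_prob s lam p x l * h (incr x l))).
    apply: ler_sum => l _; apply: ler_wpM2l.
      rewrite /step_prob; apply: sumr_ge0 => i _; apply: mulr_ge0 => //.
      by apply: sumr_ge0 => j _; apply: mulr_ge0.
    by case: ifP => [/hbal|_] //.
  rewrite (eq_bigr (fun l => h x * (step_prob s lam p x l * c l))); last first.
    by move=> l _; rewrite hincr; ring.
  rewrite -mulr_sumr; have := cbound x; have := h0 x; nra.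
pose x0 := incr (fun _ : 'I_n => 0%N) l1.
have hx0 : h x0 = a.
  rewrite /x0 hincr /c l1U /h !big1 // expr0 !mul1r //.
have e0 : 0 < (1 - a) / 2 by lra.
have [N hN] := rec x0 ((1 - a) / 2) e0.
have := hit N x0; rewrite hx0; lra.
Qed.


Unset Implicit Arguments.
Set Strict Implicit.

Theorem theorem2p2 (R : realType) (n K : nat) (kappa : 'I_K -> nat)
  (s : forall i : 'I_K, 'I_(kappa i) -> 'I_n) (lam : 'I_K -> R)
  (hK : (0 < K)%N)
  (hkappa : forall i, (0 < kappa i)%N)
  (hs_inj : forall i, injective (s i))
  (hcover : forall l : 'I_n, exists i, exists j, s i j = l)
  (hlam_pos : forall i, 0 < lam i)
  (hlam_sum : \sum_(i < K) lam i = 1)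
  (hP : exists p : ('I_n -> nat) -> forall i : 'I_K, 'I_(kappa i) -> R,
          routing_policy p /\ recurrent s lam p) :
  exists alpha : forall i : 'I_K, 'I_(kappa i) -> R,
    (forall i j, 0 <= alpha i j) /\
    (forall i, \sum_(j < kappa i) alpha i j = lam i) /\
    (forall l : 'I_n,
       \sum_(i < K) \sum_(j < kappa i) alpha i j * (l == s i j)%:R = 1 / n%:R).
Proof.
pose i0 : 'I_K := Ordinal hK.
pose l1 := s i0 (Ordinal (hkappa i0)).
have n0 : (0 < n)%N by apply: leq_ltn_trans (leq0n _) (ltn_ord l1).
have nR : (n%:R : R) != 0 by rewrite pnatr_eq0 -lt0n.
have nRp : (0 : R) < n%:R by rewrite ltr0n.
pose E := fun (i : 'I_K) (l : 'I_n) => [exists j, s i j == l].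
pose d := fun _ : 'I_n => 1 / (n%:R : R).
have d0 : forall l, 0 <= d l by move=> l; rewrite /d divr_ge0 // ltW.
case: (boolP [forall I : {set 'I_K}, \sum_(i in I) lam i <= \sum_(l in nbr E I) d l]) => [hall|nhall].
  have hh : hallc E [set: 'I_K] lam d by move=> I _; exact: (forallP hall I).
  have [al [a1 a2 a3 a4]] := hall_main (leqnn _) (fun i _ => ltW (hlam_pos i)) d0 hh.
  have hcol : forall l, \sum_i al i l = 1 / n%:R.
    have tot : \sum_l (d l - \sum_(i in [set: 'I_K]) al i l) = 0.
      have e1 : \sum_l \sum_(i in [set: 'I_K]) al i l = 1.
        rewrite exchange_big /= -hlam_sum.
        rewrite (eq_bigl (fun i => true)); last by move=> i; rewrite inE.
        by apply: eq_bigr => i _; apply: a3; rewrite inE.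
      have e2 : \sum_l d l = 1.
        by rewrite sumr_const card_ord /d -mulr_natr; field.
      by rewrite sumrB e1 e2 subrr.
    have nn : forall l, predT l -> 0 <= d l - \sum_(i in [set: 'I_K]) al i l.
      by move=> l _; have := a4 l; lra.
    have hz := psumr_eq0P nn tot.
    move=> l; have := hz l isT.
    rewrite (eq_bigl (fun i => true)); last by move=> i; rewrite inE.
    move=> h; rewrite -/(d l); lra.
  have key : forall i l, al i l = \sum_j (s i j == l)%:R * al i l.
    move=> i l; case: (boolP (E i l)) => [/existsP[j0 /eqP e]|ne].
      rewrite (bigD1 j0) //= e eqxx mul1r big1 ?addr0 // => j ne.
      case: eqP => [e'|]; last by rewrite mul0r.
      by move: ne; rewrite -e in e'; rewrite (hs_inj _ _ _ e') eqxx.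
    by rewrite (a2 _ _ ne) big1 // => j _; rewrite mulr0.
  exists (fun i j => al i (s i j)); split; first by move=> i j; apply: a1.
  split.
    move=> i; rewrite (eq_bigr (fun j => \sum_l (s i j == l)%:R * al i l)); last first.
      by move=> j _; rewrite sum_pick.
    rewrite exchange_big /= -(a3 i); last by rewrite inE.
    by apply: eq_bigr => l _; rewrite -key.
  move=> l; rewrite -(hcol l); apply: eq_bigr => i _; rewrite [RHS]key.
  apply: eq_bigr => j _; rewrite eq_sym; case: eqP => [->|]; rewrite ?mul1r ?mulr1 ?mul0r ?mulr0 //.
exfalso.
case/forallPn: nhall => I; rewrite -ltNge => hI.
case: hP => p [[p0 [p1 _]] rec].
set U := nbr E I in hI.
have sU : forall i j, i \in I -> s i j \in U.
  by move=> i j iI; rewrite inE; apply/existsP; exists i; rewrite iI /= /E; apply/existsP; exists j.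
have hU : \sum_(l in U) d l = #|U|%:R / n%:R.
  by rewrite /d sumr_const -[_ *+ #|U|]mulr_natr mulrC mul1r.
rewrite hU in hI.
set mu := \sum_(i in I) lam i in hI.
pose nu := \sum_(i in ~: I) lam i.
have munu : mu + nu = 1.
  rewrite -hlam_sum (bigID (fun i => i \in I)) /=; congr (_ + _).
  by apply: eq_bigl => i; rewrite !inE.
have mu0 : 0 <= mu by apply: sumr_ge0 => i _; apply: ltW.
have nu0 : 0 <= nu by apply: sumr_ge0 => i _; apply: ltW.
have cardU : (#|U| + #|~: U| = n)%N by rewrite cardsC card_ord.
have mR : (#|U|%:R : R) + #|~: U|%:R = n%:R by rewrite -natrD cardU.
have hm : (#|U|%:R : R) < mu * n%:R by rewrite -ltr_pdivrMr.
case: (set_0Vmem I) => [I0|[i1 i1I]].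
  move: hI; rewrite /mu I0 big_set0 => h. have : (0:R) <= #|U|%:R / n%:R by rewrite divr_ge0. lra.
pose lU := s i1 (Ordinal (hkappa i1)).
have lUU : lU \in U by apply: sU.
have m0 : (0 < #|U|)%N by rewrite card_gt0; apply/set0Pn; exists lU.
have m0R : (0 : R) < #|U|%:R by rewrite ltr0n.
have nupos : 0 < nu.
  case: (boolP [exists i, i \notin I]) => [/existsP[i2 i2I]|allI].
    rewrite /nu (bigD1 i2) /=; last by rewrite inE.
    have := hlam_pos i2; have : 0 <= \sum_(i in ~: I | i != i2) lam i.
      by apply: sumr_ge0 => i _; apply: ltW.
    lra.
  have UT : #|U| = n.
    suff c0 : #|~: U| = 0%N by move: cardU; rewrite c0 addn0.
    apply/eqP; rewrite cards_eq0; apply/eqP/setP => l; rewrite in_setC in_set0.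
    have [i [j e]] := hcover l; rewrite -e sU //.
    by move/existsPn: allI => /(_ i); rewrite negbK.
  exfalso; move: hI; rewrite UT divff //; lra.
have mupos : 0 < mu.
  have h1 : (0:R) < mu * n%:R by lra.
  by move: h1; rewrite pmulr_lgt0.
set m := (#|U|%:R : R) in mR hm m0R.
set mc := (#|~: U|%:R : R) in mR.
have mcgt : nu * n%:R < mc by nra.
have mcpos : 0 < mc.
  have h1 : 0 < nu * n%:R by rewrite mulr_gt0.
  lra.
pose a := m / (n%:R * mu).
pose b := mc / (n%:R * nu).
have mun : 0 < n%:R * mu by rewrite mulr_gt0.
have nun : 0 < n%:R * nu by rewrite mulr_gt0.
have a0 : 0 < a by rewrite /a divr_gt0.
have a1 : a < 1 by rewrite /a ltr_pdivrMr // mul1r mulrC.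
have b1 : 1 <= b by rewrite /b ler_pdivlMr // mul1r mulrC ltW.
have ab : a <= b by lra.
have hsum : mu * a + nu * b = 1.
  have e1 : mu * a = m / n%:R by rewrite /a; field; rewrite ?nR ?(gt_eqF mupos) //= ?(lt0r_neq0 mupos).
  have e2 : nu * b = mc / n%:R by rewrite /b; field; rewrite ?nR ?(lt0r_neq0 nupos).
  by rewrite e1 e2 -mulrDl mR divff.
have hs : m * a^-1 + mc * b^-1 = n%:R.
  rewrite /a /b !invf_div.
  have -> : m * (n%:R * mu / m) = n%:R * mu by field; rewrite (lt0r_neq0 m0R).
  have -> : mc * (n%:R * nu / mc) = n%:R * nu by field; rewrite (lt0r_neq0 mcpos).
  by rewrite -mulrDr munu mulr1.
have amgm := amgm_two n0 a0 (lt_le_trans ltr01 b1) hs.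
apply: (nonrec p0 p1 (fun i => ltW (hlam_pos i)) sU lUU a0 a1 ab _ amgm rec).
by rewrite hsum.
Qed.
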